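(* Consider the system of ODEs $$\frac{dx_j}{dt}=\gamma(\underline{x})\,\nu_0(\underline{x})\,(\hat x_j-x_j),\qquad j=1,\dots,J,$$ in the linear case, i.e. where $\hat x_j=\nu_j/\nu_0$ are constants for $j=1,\dots,J$. For $j_1,j_2\in\{1,\dots,J\}$ define the $(j_1,j_2)$-density $\rho_{j_1,j_2}(t)=x_{j_1}(t)/x_{j_2}(t)$ and the $(j_1,j_2)$-fixed point ratio $\phi_{j_1,j_2}=\nu_{j_1}/\nu_{j_2}$ (constant in this case). Then along any solution, $\rho_{j_1,j_2}(t)$ changes monotonically in $t$.
   Context: Here $\gamma(\underline{x})>0$ is the cumulative clock function and $\nu_j$ is the expected increment of the counting variable $X_j$ per micro-event; $x_j=X_j/X_0$. *)

(* Defs.v *)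
From HB Require Import structures.
From mathcomp Require Import all_boot all_order all_algebra.
From mathcomp Require Import all_classical all_reals all_analysis.
Set Implicit Arguments. Unset Strict Implicit. Unset Printing Implicit Defensive.

(* Main.v *)
Require Import Defs.
From HB Require Import structures.
From mathcomp Require Import all_boot all_order all_algebra.
From mathcomp Require Import all_classical all_reals all_analysis.
From mathcomp Require Import ring lra.
Import Order.TTheory GRing.Theory Num.Theory numFieldNormedType.Exports.
Local Open Scope ring_scope.

Section Helpers.
Local Open Scope classical_set_scope.
Local Open Scope ring_scope.

Lemma itv_sub {R : realType} {a b s t u : R} :
  s \in `]a, b[ -> t \in `]a, b[ -> s <= u -> u <= t -> u \in `]a, b[.
Proof.
rewrite !in_itv /= => /andP[h1 _] /andP[_ h2] h3 h4.
by apply/andP; split; [exact: lt_le_trans h1 h3 | exact: le_lt_trans h4 h2].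
Qed.

Lemma cont_on {R : realType} {f df : R -> R} {a b s t : R} :
  (forall u, u \in `]a, b[ -> is_derive u 1 f (df u)) ->
  s \in `]a, b[ -> t \in `]a, b[ ->
  {within `[s, t], continuous f}.
Proof.
move=> hd hs ht; apply: derivable_within_continuous => u.
rewrite in_itv /= => /andP[h1 h2].
by case: (hd u (itv_sub hs ht h1 h2)).
Qed.

Lemma mono_le {R : realType} {f df : R -> R} {a b : R} :
  (forall u, u \in `]a, b[ -> is_derive u 1 f (df u)) ->
  (forall u, u \in `]a, b[ -> 0 <= df u) ->
  forall s t, s \in `]a, b[ -> t \in `]a, b[ -> s <= t -> f s <= f t.
Proof.
move=> hd hp s t hs ht; rewrite le_eqVlt => /predU1P [-> //|st].
have sub : forall u, u \in `]s, t[ -> u \in `]a, b[.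
  move=> u; rewrite in_itv /= => /andP[h1 h2].
  exact: (itv_sub hs ht (ltW h1) (ltW h2)).
have [c cin eq] := MVT st (fun u uin => hd u (sub u uin)) (cont_on hd hs ht).
rewrite -subr_ge0 eq; apply: mulr_ge0; first exact: hp (sub c cin).
by rewrite subr_ge0 ltW.
Qed.

Lemma mono_ge {R : realType} {f df : R -> R} {a b : R} :
  (forall u, u \in `]a, b[ -> is_derive u 1 f (df u)) ->
  (forall u, u \in `]a, b[ -> df u <= 0) ->
  forall s t, s \in `]a, b[ -> t \in `]a, b[ -> s <= t -> f t <= f s.
Proof.
move=> hd hp s t hs ht st.
have := @mono_le R (fun u => - f u) (fun u => - df u) a b _ _ s t hs ht st.
rewrite lerN2; apply.
- move=> u uI; exact: is_deriveN (hd u uI).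
- by move=> u uI; rewrite oppr_ge0 hp.
Qed.

Lemma sign_const {R : realType} {J} {nu0 : 'rV[R]_J -> R} :
  continuous nu0 -> (forall y, nu0 y != 0) ->
  (forall y, 0 < nu0 y) \/ (forall y, nu0 y < 0).
Proof.
move=> hc hn.
have key : forall y, 0 < nu0 0 -> nu0 y < 0 -> False.
  move=> y h0 hy.
  have cg : {within `[0, 1], continuous (fun s : R => nu0 (s *: y))}.
    apply: continuous_subspaceT => s.
    by apply: continuous_comp; [exact: scalel_continuous | exact: hc].
  have [c _ hc0] := @IVT R (fun s : R => nu0 (s *: y)) 0 1 0 ler01 cg
    ltac:(rewrite /= scale0r scale1r ge_min le_max; apply/andP; split;
          apply/orP; [right|left]; exact: ltW).
  by move: (hn (c *: y)); rewrite hc0 eqxx.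
have key2 : forall y, nu0 0 < 0 -> 0 < nu0 y -> False.
  move=> y h0 hy.
  have cg : {within `[0, 1], continuous (fun s : R => nu0 (s *: y))}.
    apply: continuous_subspaceT => s.
    by apply: continuous_comp; [exact: scalel_continuous | exact: hc].
  have [c _ hc0] := @IVT R (fun s : R => nu0 (s *: y)) 0 1 0 ler01 cg
    ltac:(rewrite /= scale0r scale1r ge_min le_max; apply/andP; split;
          apply/orP; [left|right]; exact: ltW).
  by move: (hn (c *: y)); rewrite hc0 eqxx.
case: (ltgtP 0 (nu0 0)) => h0.
- left => y; case: (ltgtP 0 (nu0 y)) => // hy.
  + by case: (key y h0 hy).
  + by move: (hn y); rewrite -hy eqxx.
- right => y; case: (ltgtP 0 (nu0 y)) => // hy.
  + by case: (key2 y h0 hy).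
  + by move: (hn y); rewrite -hy eqxx.
- by move: (hn 0); rewrite -h0 eqxx.
Qed.

End Helpers.

Theorem lemma4 (R : realType) (J : nat)
  (gamma nu0 : 'rV[R]_J -> R) (xhat : 'I_J -> R)
  (x : R -> 'rV[R]_J) (a b : R) (j1 j2 : 'I_J) :
  continuous gamma ->
  continuous nu0 ->
  (forall y, 0 < gamma y) ->
  (forall y, nu0 y != 0) ->
  (forall t, t \in `]a, b[ -> forall j : 'I_J,
     is_derive t 1 (fun s => x s ord0 j)
       (gamma (x t) * nu0 (x t) * (xhat j - x t ord0 j))) ->
  (forall t, t \in `]a, b[ -> x t ord0 j2 != 0) ->
  let rho := fun t => x t ord0 j1 / x t ord0 j2 in
  (forall s t, s \in `]a, b[ -> t \in `]a, b[ -> s <= t -> rho s <= rho t) \/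
  (forall s t, s \in `]a, b[ -> t \in `]a, b[ -> s <= t -> rho t <= rho s).
Proof.
move=> gc nc gp nn hd hx2 rho.
pose k := fun t => gamma (x t) * nu0 (x t).
pose w := fun t => xhat j1 * x t ord0 j2 - xhat j2 * x t ord0 j1.
have hw : forall t, t \in `]a, b[ -> is_derive t 1 w (- k t * w t).
  move=> t tI.
  have H := is_deriveB (is_deriveZ (xhat j1) (hd t tI j2))
                       (is_deriveZ (xhat j2) (hd t tI j1)).
  apply: is_derive_eq H _.
  rewrite /k /w /GRing.scale /=; ring.
have hw2 : forall t, t \in `]a, b[ ->
    is_derive t 1 (fun s => w s ^+ 2) (- (2 * k t * w t ^+ 2)).
  move=> t tI.
  have H := is_deriveX 2 (hw t tI).
  apply: is_derive_eq H _.
  rewrite /GRing.scale /=; ring.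
have hk : (forall t, 0 < k t) \/ (forall t, k t < 0).
  case: (sign_const nc nn) => h; [left|right] => t; rewrite /k.
  - exact: mulr_gt0.
  - by rewrite pmulr_rlt0.
have nochange : forall p q, p \in `]a, b[ -> q \in `]a, b[ -> p <= q ->
    w p * w q < 0 -> False.
  move=> p q pI qI pq hneg.
  have hmm : Num.min (w p) (w q) <= 0 <= Num.max (w p) (w q).
    rewrite ge_min le_max; case: (lerP (w p) 0) => hp.
    - rewrite /=; apply/orP; right; nra.
    - rewrite /= (ltW hp) andbT; nra.
  have [c cin wc] := @IVT R w p q 0 pq (cont_on hw pI qI) hmm.
  move: cin; rewrite in_itv /= => /andP[pc cq].
  have cI := itv_sub pI qI pc cq.
  case: hk => hk.
  - have := mono_ge hw2 _ c q cI qI cq.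
    rewrite wc expr0n /= => H.
    have : w q = 0.
      apply/eqP; rewrite -sqrf_eq0 eq_le sqr_ge0 andbT; apply: H.
      by move=> u _; rewrite oppr_le0; apply: mulr_ge0; [apply: mulr_ge0;
        [lra|exact: ltW] | exact: sqr_ge0].
    by move=> e; move: hneg; rewrite e mulr0 ltxx.
  - have := mono_le hw2 _ p c pI cI pc.
    rewrite wc expr0n /= => H.
    have : w p = 0.
      apply/eqP; rewrite -sqrf_eq0 eq_le sqr_ge0 andbT; apply: H.
      move=> u _; rewrite oppr_ge0; have := hk u; have := sqr_ge0 (w u); nra.
    by move=> e; move: hneg; rewrite e mul0r ltxx.
have hws : (forall t, t \in `]a, b[ -> 0 <= w t) \/
           (forall t, t \in `]a, b[ -> w t <= 0).
  case: (pselect (forall t, t \in `]a, b[ -> 0 <= w t)) => [|H]; first by left.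
  right => t tI; rewrite leNgt; apply/negP => wt.
  move/existsNP: H => [s]; move/not_implyP => [sI] /negP; rewrite -ltNge => ws.
  have hneg : w s * w t < 0 by nra.
  case: (lerP s t) => st.
  - exact: (nochange s t sI tI st hneg).
  - by apply: (nochange t s tI sI (ltW st)); rewrite mulrC.
have hr : forall t, t \in `]a, b[ ->
    is_derive t 1 rho (k t * w t / x t ord0 j2 ^+ 2).
  move=> t tI.
  have H := is_deriveM (hd t tI j1) (is_deriveV (hx2 t tI) (hd t tI j2)).
  apply: is_derive_eq H _.
  rewrite /k /w /GRing.scale /=.
  have := hx2 t tI; set d := x t ord0 j2 => dn.
  field; exact: dn.
have pos : forall t, t \in `]a, b[ -> 0 <= k t * w t ->
    0 <= k t * w t / x t ord0 j2 ^+ 2.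
  by move=> t _ h; apply: divr_ge0 => //; exact: sqr_ge0.
have neg : forall t, t \in `]a, b[ -> k t * w t <= 0 ->
    k t * w t / x t ord0 j2 ^+ 2 <= 0.
  move=> t _ h; rewrite mulrC; apply: mulr_ge0_le0 => //.
  by rewrite invr_ge0 sqr_ge0.
case: hk => hk; case: hws => hws.
- left; apply: (mono_le hr) => t tI; apply: pos => //.
  by apply: mulr_ge0; [exact: ltW | exact: hws].
- right; apply: (mono_ge hr) => t tI; apply: neg => //.
  have := hk t; have := hws t tI; nra.
- right; apply: (mono_ge hr) => t tI; apply: neg => //.
  have := hk t; have := hws t tI; nra.
- left; apply: (mono_le hr) => t tI; apply: pos => //.
  have := hk t; have := hws t tI; nra.
Qed.
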